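(* Let $c,d,s$ be positive integers with $c,d\le s$. Let $E$ be an $s\times s$ random matrix uniformly distributed over $\mathbb{F}_q^{s\times s}$, and let $F$ and $G$ be arbitrary (fixed) full-rank matrices of sizes $c\times s$ and $s\times d$, respectively. Then $$H_q(FE\mid EG)\ge cs-cd.$$
   Context: $\mathbb{F}_q$ is a finite field with $q$ elements; $H_q$ denotes Shannon (conditional) entropy with logarithm base $q$. *)

(* Defs.v *)
From HB Require Import structures.
From mathcomp Require Import all_boot all_order all_algebra all_field.
From mathcomp Require Import reals exp.
Set Implicit Arguments. Unset Strict Implicit. Unset Printing Implicit Defensive.
Import Order.TTheory GRing.Theory Num.Theory.
Local Open Scope ring_scope.

Definition logb (R : realType) (b x : R) : R := ln x / ln b.

Definition pjoint (R : realType) (Omega A B : finType)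
  (X : Omega -> A) (Y : Omega -> B) (a : A) (y : B) : R :=
  #|[set w : Omega | (X w == a) && (Y w == y)]|%:R / #|Omega|%:R.

Definition pmarg (R : realType) (Omega B : finType) (Y : Omega -> B) (y : B) : R :=
  #|[set w : Omega | Y w == y]|%:R / #|Omega|%:R.

(* Shannon conditional entropy H_b(X | Y)
   = - sum_{a,y : p(a,y) > 0} p(a,y) log_b (p(a,y) / p(y))  (convention 0 log 0 = 0) *)
Definition cond_entropy (R : realType) (Omega A B : finType)
  (X : Omega -> A) (Y : Omega -> B) (b : R) : R :=
  - \sum_(a : A) \sum_(y : B | @pjoint R _ _ _ X Y a y != 0)
      @pjoint R _ _ _ X Y a y * logb b (@pjoint R _ _ _ X Y a y / @pmarg R _ _ Y y).

(* Main.v *)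
Require Import Defs.
From HB Require Import structures.
From mathcomp Require Import all_boot all_order all_algebra all_field.
From mathcomp Require Import reals exp.
From mathcomp Require Import lra.
Import Order.TTheory GRing.Theory Num.Theory.
Local Open Scope ring_scope.

Section LA.
Variables (K : finFieldType) (c d s : nat) (F : 'M[K]_(c, s)) (G : 'M[K]_(s, d)).

Definition fJ a y := [set E : 'M[K]_s | (F *m E == a) && (E *m G == y)].
Definition fY y := [set E : 'M[K]_s | E *m G == y].

Lemma L1 a y E0 : E0 \in fJ a y -> (#|fJ a y| <= #|fJ 0%R 0%R|)%N.
Proof.
rewrite inE => /andP[/eqP h1 /eqP h2].
rewrite -(card_imset (fJ a y) (addIr (- E0))).
apply: subset_leq_card; apply/subsetP => Z /imsetP[E]; rewrite !inE.
move=> /andP[/eqP e1 /eqP e2] ->.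
by rewrite mulmxDr mulmxDl mulmxN mulNmx e1 e2 h1 h2 !subrr !eqxx.
Qed.

Lemma L2 y E0 : E0 \in fY y -> (#|fY 0%R| <= #|fY y|)%N.
Proof.
rewrite inE => /eqP h2.
rewrite -(card_imset (fY 0) (addIr E0)).
apply: subset_leq_card; apply/subsetP => Z /imsetP[E]; rewrite !inE.
move=> /eqP e2 ->.
by rewrite mulmxDl e2 h2 add0r.
Qed.

Lemma L3 : \rank F = c ->
  (#|fJ 0%R 0%R| * #|K| ^ (c * \rank (kermx G)) <= #|fY 0%R|)%N.
Proof.
move=> rkF.
have /row_freeP [F' HF'] : row_free F by rewrite /row_free rkF.
set N := row_base (kermx G).
have /row_freeP [N' HN'] : row_free N by exact: row_base_free.
have NG : N *m G = 0 by apply/sub_kermxP; rewrite eq_row_base submx_refl.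
clearbody N.
rewrite -card_mx -cardsT -cardsX.
pose f (p : 'M[K]_s * 'M[K]_(c, \rank (kermx G))) := p.1 + F' *m (p.2 *m N).
rewrite -(@card_in_imset _ _ f).
  apply: subset_leq_card; apply/subsetP => Z /imsetP[[E B]]; rewrite !inE /=.
  move=> /andP[/andP[_ /eqP e2] _] ->.
  by rewrite /f /= mulmxDl e2 -!mulmxA NG !mulmx0 add0r eqxx.
move=> [E1 B1] [E2 B2]; rewrite !inE /= => /andP[/andP[/eqP a1 _] _] /andP[/andP[/eqP a2 _] _].
rewrite /f /= => h.
have hB : B1 *m N = B2 *m N.
  have := congr1 (mulmx F) h.
  by rewrite !mulmxDr a1 a2 !add0r !mulmxA HF' !mul1mx.
have eB : B1 = B2.
  by rewrite -(mulmx1 B1) -(mulmx1 B2) -HN' !mulmxA hB.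
by move: h; rewrite eB => /addIr ->.
Qed.

End LA.
Arguments fJ {K c d s}.
Arguments fY {K d s}.
Arguments L1 {K c d s F G a y E0}.
Arguments L2 {K d s G y E0}.
Arguments L3 {K c d s F} G.

Theorem lemma1 (R : realType) (K : finFieldType) (c d s : nat)
  (F : 'M[K]_(c, s)) (G : 'M[K]_(s, d)) :
  (0 < c)%N -> (0 < d)%N -> (0 < s)%N -> (c <= s)%N -> (d <= s)%N ->
  \rank F = c -> \rank G = d ->
  ((c * s - c * d)%N%:R : R) <=
    @cond_entropy R _ _ _ (fun E : 'M[K]_s => F *m E) (fun E : 'M[K]_s => E *m G)
      (#|K|%:R : R).
Proof.
move=> c0 d0 s0 cs ds rkF rkG.
set k := (c * \rank (kermx G))%N.
have hk : (c * s - c * d <= k)%N by rewrite /k mxrank_ker rkG mulnBr.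
pose X := (fun E : 'M[K]_s => F *m E).
pose Y := (fun E : 'M[K]_s => E *m G).
pose pj := @pjoint R _ _ _ X Y.
pose pm := @pmarg R _ _ Y.
rewrite -/X -/Y.
set q := #|K|.
have q1 : (1 < q)%N := card_finNzRing_gt1 K.
have lnq : 0 < ln (q%:R : R) by apply: ln_gt0; rewrite ltr1n.
set N := #|{: 'M[K]_s}|.
have N0 : (0 < N)%N by apply/card_gt0P; exists 0.
have NR : (N%:R : R) != 0 by rewrite pnatr_eq0 -lt0n.
have hpj a y : pj a y = #|fJ F G a y|%:R / N%:R by [].
have hpm y : pm y = #|fY G y|%:R / N%:R by [].
have key a y : pj a y != 0 -> k%:R * pj a y <= - (pj a y * logb (q%:R : R) (pj a y / pm y)).
  move=> hne.
  have : (0 < #|fJ F G a y|)%N.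
    by rewrite lt0n; apply: contra hne; rewrite hpj => /eqP ->; rewrite mul0r.
  move=> /card_gt0P [E0 hE0].
  have hE0' : E0 \in fY G y by move: hE0; rewrite !inE => /andP[].
  have hn : (#|fJ F G a y| * q ^ k <= #|fY G y|)%N.
    apply: leq_trans (L2 hE0').
    apply: leq_trans (L3 G rkF).
    by rewrite leq_mul2r (L1 hE0) orbT.
  have nJ : (0 < #|fJ F G a y|)%N by apply/card_gt0P; exists E0.
  have nY : (0 < #|fY G y|)%N by apply/card_gt0P; exists E0.
  have -> : pj a y / pm y = #|fJ F G a y|%:R / #|fY G y|%:R.
    by rewrite hpj hpm invf_div mulrA -(mulrA _ _^-1) mulVf // mulr1.
  have hp : 0 < pj a y by rewrite lt_def hne hpj divr_ge0 ?ler0n.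
  set t := (#|fJ F G a y|%:R / #|fY G y|%:R : R).
  have t0 : 0 < t by rewrite divr_gt0 // ltr0n.
  have ht : t * (q%:R : R) ^+ k <= 1.
    by rewrite /t mulrAC ler_pdivrMr ?ltr0n // mul1r -natrX -natrM ler_nat.
  have hl : ln t + k%:R * ln (q%:R : R) <= 0.
    have q0 : (0 : R) < q%:R by rewrite ltr0n (ltn_trans _ q1).
    have := ln_le0 ht; rewrite lnM ?posrE ?exprn_gt0 //.
    by rewrite (lnXn k q0) mulr_natl.
  rewrite /logb mulrC -mulrN ler_pM2l // -mulNr ler_pdivlMr //.
  by rewrite -subr_le0 opprK addrC.
have hcount : (\sum_(a : 'M[K]_(c,s)) \sum_(y : 'M[K]_(s,d)) #|fJ F G a y|)%N = N.
  rewrite pair_big /=.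
  rewrite /N -sum1_card (partition_big (fun w => (X w, Y w)) predT) //=.
  apply: eq_bigr => [[a y]] _ /=; rewrite -sum1_card.
  by apply: eq_bigl => w; rewrite !inE /X /Y xpair_eqE.
have hp1 : \sum_(a : 'M[K]_(c,s)) \sum_(y : 'M[K]_(s,d) | pj a y != 0) pj a y = 1.
  transitivity (\sum_(a : 'M[K]_(c,s)) \sum_(y : 'M[K]_(s,d)) pj a y).
    apply: eq_bigr => a _; rewrite big_mkcond; apply: eq_bigr => y _ /=.
    by case: eqP => [->|].
  rewrite (eq_bigr (fun a => \sum_(y : 'M[K]_(s,d)) #|fJ F G a y|%:R / N%:R)); last first.
    by move=> a _; apply: eq_bigr => y _; rewrite hpj.
  under eq_bigr do rewrite -mulr_suml -natr_sum.
  by rewrite -mulr_suml -natr_sum hcount divff.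
rewrite /cond_entropy -sumrN.
apply: (@le_trans _ _ (k%:R)); first by rewrite ler_nat.
have -> : (k%:R : R) = \sum_(a : 'M[K]_(c,s)) \sum_(y : 'M[K]_(s,d) | pj a y != 0) pj a y * k%:R.
  transitivity ((\sum_(a : 'M[K]_(c,s)) \sum_(y : 'M[K]_(s,d) | pj a y != 0) pj a y) * k%:R).
    by rewrite hp1 mul1r.
  by rewrite mulr_suml; apply: eq_bigr => a _; rewrite mulr_suml.
apply: ler_sum => a _.
rewrite -sumrN; apply: ler_sum => y hy.
by rewrite mulrC; apply: key.
Qed.
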